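(* Let $n\ge 2$ and $k\ge 1$. If there exists a set of $k$ Gozinta Boxes in dimension $n$, then there exists a set of $k$ Gozinta Boxes in dimension $n-1$.
   Context: An $n$-dimensional box $A$ has closed side lengths $a_1\le\dots\le a_n$ (positive reals). A state of $A$ is either closed or expanded along one side $i$: $a_i$ is replaced by $a_i'$ with $a_i\le a_i'\le 2a_i$, other sides unchanged (only one side can expand). The dimension vector of a state is its side lengths sorted non-decreasingly. A box in some state fits inside another box in some state if each coordinate of the outer one's dimension vector is strictly larger than the corresponding coordinate of the inner one's. An order $X_1,\dots,X_k$ (innermost to outermost) is a possible arrangement if each box can be given a state so that $X_j$ fits inside $X_{j+1}$ for all $j$; states may differ between arrangements. A set of $k$ Gozinta Boxes is a collection of $k$ boxes $A_1,\dots,A_k$ (of the same dimension) such that both the natural order $A_1,\dots,A_k$ and the reverse order $A_k,\dots,A_1$ are possible arrangements. *)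

(* Defs.v *)
From mathcomp Require Import all_boot all_order all_algebra.
From mathcomp Require Import reals.
Set Implicit Arguments. Unset Strict Implicit. Unset Printing Implicit Defensive.
Import Order.TTheory GRing.Theory Num.Theory.
Local Open Scope ring_scope.

(* A box in dimension n is given by its list of closed side lengths:
   n positive reals (order of the list is irrelevant: only the sorted
   dimension vector is ever used). *)
Definition is_box (R : realType) (n : nat) (a : seq R) : Prop :=
  size a = n /\ all (fun x => 0 < x) a.

(* s is (the list of side lengths of) a state of the box a: either closed,
   or expanded along exactly one side i, a_i <= a_i' <= 2 a_i. *)
Definition is_state (R : realType) (a s : seq R) : Prop :=
  s = a \/
  exists (i : nat) (x : R),
    (i < size a)%N /\ nth 0 a i <= x <= 2 * nth 0 a i /\ s = set_nth 0 a i x.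

Definition dimvec (R : realType) (s : seq R) : seq R := sort <=%R s.

Definition fits (R : realType) (s_in s_out : seq R) : Prop :=
  all2 (fun x y => x < y) (dimvec s_in) (dimvec s_out).

Definition possible_arrangement (R : realType) (X : seq (seq R)) : Prop :=
  exists S : seq (seq R),
    size S = size X /\
    (forall j, (j < size X)%N -> is_state (nth [::] X j) (nth [::] S j)) /\
    (forall j, (j.+1 < size X)%N -> fits (nth [::] S j) (nth [::] S j.+1)).

Definition gozinta (R : realType) (n k : nat) (A : seq (seq R)) : Prop :=
  size A = k /\
  (forall j, (j < k)%N -> is_box n (nth [::] A j)) /\
  possible_arrangement A /\
  possible_arrangement (rev A).

(* Main.v *)
Require Import Defs.
From mathcomp Require Import all_boot all_order all_algebra.
From mathcomp Require Import reals.
Set Implicit Arguments. Unset Strict Implicit. Unset Printing Implicit Defensive.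
Import Order.TTheory GRing.Theory Num.Theory.

Section Aux.
Variable R : realType.
Local Open Scope ring_scope.

Lemma sorted_rcons_all (b : seq R) (M : R) :
  sorted <=%R (rcons b M) -> all (fun y => y <= M) b.
Proof.
elim: b => [|h b IH] //= H.
have := H; rewrite (path_sortedE le_trans) => /andP [H1 H2].
rewrite (IH H2) andbT.
by move/allP: H1; apply; rewrite mem_rcons in_cons eqxx.
Qed.

Lemma all_sorted_rcons (b : seq R) (M : R) :
  sorted <=%R b -> all (fun y => y <= M) b -> sorted <=%R (rcons b M).
Proof.
elim: b => [|h b IH] //= Hs /andP [HhM HbM].
rewrite (path_sortedE le_trans) in Hs; case/andP: Hs => Hh Hs.
rewrite (path_sortedE le_trans) (IH Hs HbM) andbT all_rcons HhM /=.
exact: Hh.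
Qed.

Lemma sort_rcons_max (s t : seq R) (X : R) :
  perm_eq s (rcons t X) -> all (fun y => y <= X) t ->
  sort <=%R s = rcons (sort <=%R t) X.
Proof.
move=> Hp Ha.
have -> : sort <=%R s = sort <=%R (rcons (sort <=%R t) X).
  apply/(perm_sortP le_total le_trans le_anti).
  apply: (perm_trans Hp).
  rewrite perm_rcons perm_sym perm_rcons perm_cons perm_sym.
  by rewrite perm_sym perm_sort.
apply: sorted_sort; first exact: le_trans.
apply: all_sorted_rcons; first exact: (sort_sorted le_total).
by rewrite (perm_all _ (permEl (perm_sort _ _))).
Qed.

Lemma perm_rem_of (a c : seq R) (y : R) :
  perm_eq a (y :: c) -> perm_eq (rem y a) c.
Proof.
move=> H.
have ya : y \in a by rewrite (perm_mem H) mem_head.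
rewrite -(perm_cons y); apply: perm_trans _ H; rewrite perm_sym; exact: perm_to_rem.
Qed.

Lemma set_nth_perm (a : seq R) i x :
  (i < size a)%N -> perm_eq (set_nth 0 a i x) (x :: rem (nth 0 a i) a).
Proof.
move=> Hi.
have Ea : a = take i a ++ nth 0 a i :: drop i.+1 a.
  by rewrite -(drop_nth 0 Hi) cat_take_drop.
rewrite set_nthE Hi.
have H1 : perm_eq a (nth 0 a i :: (take i a ++ drop i.+1 a)).
  by rewrite {1}Ea -cat1s perm_catCA.
rewrite -cat1s perm_catCA /= perm_cons perm_sym.
exact: perm_rem_of.
Qed.

Definition drop_max (a : seq R) := take (size a).-1 (sort <=%R a).

Lemma state_size (a s : seq R) : is_state a s -> size s = size a.
Proof.
case=> [->|[i [x [Hi [_ ->]]]]] //.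
rewrite size_set_nth; apply/maxn_idPr; exact: Hi.
Qed.

Lemma all_rem_le (b : seq R) y (p : pred R) : all p b -> all p (rem y b).
Proof. move/allP=> H; apply/allP=> z /mem_rem; exact: H. Qed.

Lemma key0 (a s b : seq R) (M : R) :
  perm_eq a (rcons b M) -> all (fun y => y <= M) b -> is_state a s ->
  exists t X, [/\ is_state b t, perm_eq s (rcons t X) & all (fun y => y <= X) t].
Proof.
move=> Hp HbM.
have Hp' : perm_eq a (M :: b) by rewrite (perm_trans Hp) // perm_rcons.
case=> [->|[i [x [Hi [Hx ->]]]]].
  by exists b, M; split => //; left.
set y := nth 0 a i.
have Hps := set_nth_perm x Hi; rewrite -/y in Hps.
have ya : y \in M :: b by rewrite -(perm_mem Hp') mem_nth.
case/andP: Hx => Hyx Hx2.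
case: (eqVneq y M) => [yM|yM].
  exists b, x; split.
  - by left.
  - apply: (perm_trans Hps); rewrite perm_sym perm_rcons perm_cons perm_sym.
    by apply: perm_rem_of; rewrite yM.
  - apply/allP=> z zb; apply: le_trans (allP HbM z zb) _; by rewrite -yM.
have yb : y \in b by move: ya; rewrite in_cons (negPf yM).
have yleM : y <= M by exact: (allP HbM).
have Hrem : perm_eq (rem y a) (M :: rem y b).
  apply: perm_rem_of; apply: (perm_trans Hp').
  rewrite perm_sym -[M :: rem y b]cat1s -[y :: _]cat1s perm_catCA /= perm_cons.
  rewrite perm_sym; exact: perm_to_rem.
have Hs2 : perm_eq (set_nth 0 a i x) (x :: M :: rem y b).
  by apply: (perm_trans Hps); rewrite perm_cons.
have Hj : (index y b < size b)%N by rewrite index_mem.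
have Hny : nth 0 b (index y b) = y by exact: nth_index.
have [xM|Mx] := lerP x M.
  exists (set_nth 0 b (index y b) x), M; split.
  - right; exists (index y b), x; split => //; rewrite Hny; split => //.
    by rewrite Hyx.
  - apply: (perm_trans Hs2).
    rewrite perm_sym perm_rcons perm_sym -[M :: rem y b]cat1s -[x :: _]cat1s perm_catCA /= perm_cons.
    by have := set_nth_perm x Hj; rewrite Hny perm_sym.
  - have := set_nth_perm x Hj; rewrite Hny => /perm_all ->.
    by rewrite /= xM all_rem_le.
exists (set_nth 0 b (index y b) M), x; split.
- right; exists (index y b), M; split => //; rewrite Hny; split => //.
  by rewrite yleM (le_trans (ltW Mx) Hx2).
- apply: (perm_trans Hs2); rewrite perm_sym perm_rcons perm_cons.
  by have := set_nth_perm M Hj; rewrite Hny.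
- have := set_nth_perm M Hj; rewrite Hny => /perm_all ->.
  rewrite /= (ltW Mx) /=; apply/allP => z /mem_rem zb.
  exact: le_trans (allP HbM z zb) (ltW Mx).
Qed.

Lemma key (a s : seq R) n : size a = n.+1 -> is_state a s ->
  exists t, is_state (drop_max a) t /\ dimvec t = take n (dimvec s).
Proof.
move=> Hsz Hst.
have Hss : size (sort <=%R a) = n.+1 by rewrite size_sort.
have Hsorted := sort_sorted (@le_total _ R) a.
have Hperm : perm_eq (sort <=%R a) a by rewrite (permEl (perm_sort _ _)).
move: Hss Hsorted Hperm; rewrite /drop_max Hsz /=.
case/lastP: (sort <=%R a) => [|b M] //.
rewrite size_rcons => -[Hb] Hsorted Hperm.
rewrite -cats1 -Hb take_size_cat //.
have Hp : perm_eq a (rcons b M) by rewrite perm_sym.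
have [t [X [H1 H2 H3]]] :=
  key0 Hp (sorted_rcons_all Hsorted) Hst.
exists t; split => //.
rewrite /dimvec (sort_rcons_max H2 H3) -cats1 take_size_cat //.
by rewrite size_sort (state_size H1).
Qed.

Lemma all2_take (r : R -> R -> bool) (x y : seq R) m :
  all2 r x y -> all2 r (take m x) (take m y).
Proof.
elim: x y m => [|h x IH] [|h' y] [|m] //= /andP [H1 H2].
by rewrite H1 IH.
Qed.

Lemma choice_seq (P : nat -> seq R -> Prop) m :
  (forall j, (j < m)%N -> exists t, P j t) ->
  exists T : seq (seq R), size T = m /\ forall j, (j < m)%N -> P j (nth [::] T j).
Proof.
elim: m => [|m IH] H; first by exists [::].
have [T [HT HP]] : exists T : seq (seq R), size T = m /\ forall j, (j < m)%N -> P j (nth [::] T j).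
  by apply: IH => j Hj; apply: H; apply: ltnW.
have [t Ht] := H m (ltnSn m).
exists (rcons T t); split; first by rewrite size_rcons HT.
move=> j Hj; rewrite nth_rcons HT.
rewrite ltnS leq_eqVlt in Hj; case/orP: Hj => [/eqP ->|Hjm].
  by rewrite ltnn eqxx.
by rewrite Hjm; apply: HP.
Qed.

Lemma arr n (X : seq (seq R)) :
  (forall j, (j < size X)%N -> size (nth [::] X j) = n.+1) ->
  possible_arrangement X -> possible_arrangement (map drop_max X).
Proof.
move=> Hsz [S [HS [Hst Hfit]]].
have [T [HT HP]] := @choice_seq (fun j t => is_state (drop_max (nth [::] X j)) t
     /\ dimvec t = take n (dimvec (nth [::] S j))) (size X)
  (fun j Hj => key (Hsz j Hj) (Hst j Hj)).
exists T; rewrite size_map; split => //; split.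
  by move=> j Hj; rewrite (nth_map [::]) //; case: (HP j Hj).
move=> j Hj; rewrite /fits.
have [_ E1] := HP j (ltnW Hj).
have [_ E2] := HP j.+1 Hj.
rewrite E1 E2; apply: all2_take; exact: Hfit.
Qed.
End Aux.

Theorem proposition15 (R : realType) (n k : nat) :
  (2 <= n)%N -> (1 <= k)%N ->
  (exists A : seq (seq R), gozinta n k A) ->
  exists B : seq (seq R), gozinta n.-1 k B.
Proof.
move=> Hn _ [A [HA [Hbox [Har Hrev]]]].
have Hn' : n = n.-1.+1 by rewrite prednK // (leq_trans _ Hn).
have Hsz : forall j, (j < size A)%N -> size (nth [::] A j) = n.-1.+1.
  by move=> j Hj; rewrite -Hn'; case: (Hbox j _) => //; rewrite -HA.
exists (map (@drop_max R) A); split; first by rewrite size_map.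
split.
  move=> j Hj; rewrite (nth_map [::]) ?HA //.
  have [E Hpos] := Hbox j Hj.
  rewrite /is_box /drop_max size_takel ?size_sort ?E //; last exact: leq_pred.
  split => //; apply/allP => z /mem_take; rewrite mem_sort => Hz.
  exact: (allP Hpos).
split; first exact: arr Hsz Har.
rewrite -map_rev; apply: arr Hrev => j; rewrite size_rev => Hj.
rewrite nth_rev //; apply: Hsz; rewrite ltn_subrL; apply/andP; split => //.
exact: leq_ltn_trans Hj.
Qed.
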